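(* Let $G$ be a large scale group whose large scale structure is induced by a Cayley metric $d$. Then $\mathrm{Ends}(G)$ is non-metrizable if and only if one of the following holds: (1) there is a bounded subset $B$ of $G$ such that the union of the bounded $1$-components of $G\setminus B$ is unbounded; (2) there is a bounded subset $B$ of $G$ such that $G\setminus B$ has infinitely many unbounded $1$-components.
   Context: A large scale group is a group $G$ with a bornology $\mathcal B$ (a cover of $G$ closed under subsets and finite unions) closed under inverses and products; uniformly bounded covers are those refining $\{gB\}_{g\in G}$ for some $B\in\mathcal B$, and bounded sets are members of $\mathcal B$. A Cayley graph of $G$ is a connected graph $\Gamma$ with vertex set $G$ whose graph metric is left-invariant and such that the inclusion $G\to\Gamma$ is a coarse equivalence; the restriction $d$ of its graph metric to $G$ is a Cayley metric (so $d$-bounded sets are exactly the bounded sets of $G$). The $1$-components of $A\subseteq G$ are the equivalence classes of $A$ under the relation ''joined by a finite sequence in $A$ whose consecutive terms are at $d$-distance at most 1''. For a uniformly bounded cover $\mathcal U$ and $A\subseteq G$, $st(A,\mathcal U)$ is the union of members of $\mathcal U$ meeting $A$. $A$ is coarsely clopen if $st(A,\mathcal U)\cap st(G\setminus A,\mathcal U)$ is bounded for every uniformly bounded $\mathcal U$. An end of $G$ is a family of unbounded coarsely clopen sets maximal with respect to all finite intersections being unbounded. $\mathrm{Ends}(G)$ is topologized by the basis consisting of the sets $U_{end}=\{E\in\mathrm{Ends}(G):U\in E\}$, $U$ ranging over coarsely clopen subsets of $G$. *)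

(* Defs.v *)
From Stdlib Require Import Reals List Arith.
Set Implicit Arguments.

Section Defs.
Variable G : Type.

Record group_laws (mul : G -> G -> G) (inv : G -> G) (e : G) : Prop := {
  mulA : forall x y z, mul x (mul y z) = mul (mul x y) z;
  mul1g : forall x, mul e x = x;
  mulVg : forall x, mul (inv x) x = e }.

Variable E : G -> G -> Prop.  (* adjacency relation of the Cayley graph *)

Inductive walk : nat -> G -> G -> Prop :=
| walk0 : forall x, walk 0 x x
| walkS : forall n x y z, E x y -> walk n y z -> walk (S n) x z.

(* graph metric: d(x,y) <= n *)
Definition dle (x y : G) (n : nat) : Prop := exists m, m <= n /\ walk m x y.

Definition connected_graph : Prop := forall x y, exists n, walk n x y.

(* d-ls_bounded sets = ls_bounded sets of the induced large scale structure *)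
Definition ls_bounded (B : G -> Prop) : Prop :=
  exists x0 n, forall b, B b -> dle x0 b n.

(* uniformly ls_bounded covers: covers of G refining {g B}_g for some ls_bounded B *)
Definition unif_bounded_cover (mul : G -> G -> G) (U : (G -> Prop) -> Prop) : Prop :=
  (forall x, exists V, U V /\ V x) /\
  exists B, ls_bounded B /\
    forall V, U V -> exists g, forall x, V x -> exists b, B b /\ x = mul g b.

Definition star (A : G -> Prop) (U : (G -> Prop) -> Prop) : G -> Prop :=
  fun x => exists V, U V /\ V x /\ exists a, V a /\ A a.

Definition coarsely_clopen (mul : G -> G -> G) (A : G -> Prop) : Prop :=
  forall U, unif_bounded_cover mul U ->
    ls_bounded (fun x => star A U x /\ star (fun y => ~ A y) U x).

(* intersection of a finite list of subsets (empty list gives G) *)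
Definition list_inter (l : list (G -> Prop)) : G -> Prop :=
  fun x => forall A, In A l -> A x.

Definition admissible_family (mul : G -> G -> G) (F : (G -> Prop) -> Prop) : Prop :=
  (forall A, F A -> coarsely_clopen mul A /\ ~ ls_bounded A) /\
  (forall l, (forall A, In A l -> F A) -> ~ ls_bounded (list_inter l)).

Definition is_end (mul : G -> G -> G) (F : (G -> Prop) -> Prop) : Prop :=
  admissible_family mul F /\
  forall F', admissible_family mul F' -> (forall A, F A -> F' A) ->
    forall A, F' A -> F A.

Definition Ends (mul : G -> G -> G) : Type := { F : (G -> Prop) -> Prop | is_end mul F }.

(* topology on Ends generated by the basis U_end = {e | U in e}, U coarsely clopen *)
Definition ends_open (mul : G -> G -> G) (O : Ends mul -> Prop) : Prop :=
  forall p, O p -> exists U, coarsely_clopen mul U /\ proj1_sig p U /\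
    forall q, proj1_sig q U -> O q.

Definition metrizable_ends (mul : G -> G -> G) : Prop :=
  exists m : Ends mul -> Ends mul -> R,
    (forall p q, m p q = 0%R <-> p = q) /\
    (forall p q, m p q = m q p) /\
    (forall p q r, (m p r <= m p q + m q r)%R) /\
    (forall O, ends_open O <->
       (forall p, O p -> exists eps, (0 < eps)%R /\ forall q, (m p q < eps)%R -> O q)).

(* 1-components: chains inside A with consecutive terms at d-distance <= 1 *)
Inductive chain1 (A : G -> Prop) (x : G) : G -> Prop :=
| chain1_refl : A x -> chain1 A x x
| chain1_step : forall y z, chain1 A x y -> A z -> dle y z 1 -> chain1 A x z.

Definition comp1 (A : G -> Prop) (x : G) : G -> Prop := fun y => chain1 A x y.

Definition is_comp1 (A : G -> Prop) (C : G -> Prop) : Prop :=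
  exists x, A x /\ C = comp1 A x.

Definition union_bounded_comps (A : G -> Prop) : G -> Prop :=
  fun y => exists C, is_comp1 A C /\ ls_bounded C /\ C y.

Definition finite_family (P : (G -> Prop) -> Prop) : Prop :=
  exists l : list (G -> Prop), forall C, P C -> In C l.

End Defs.

(* Main.v *)
Require Import Defs.
From Stdlib Require Import Reals List Arith Lia Lra Classical ClassicalEpsilon FunctionalExtensionality PropExtensionality ProofIrrelevance Cantor.
From mathcomp Require classical_sets.

Section Main.
Variables (G : Type) (mul : G -> G -> G) (inv : G -> G) (e : G) (E : G -> G -> Prop).
Hypothesis Hgrp : group_laws mul inv e.
Hypothesis Hsym : forall x y, E x y -> E y x.
Hypothesis Hconn : connected_graph E.
Hypothesis Hinv : forall g x y n, dle E (mul g x) (mul g y) n <-> dle E x y n.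

Notation d := (dle E).
Notation bnd := (ls_bounded E).
Notation CC := (coarsely_clopen E mul).

Lemma walk_app : forall n x y, walk E n x y -> forall m z, walk E m y z -> walk E (n+m) x z.
Proof. induction 1; intros; simpl; auto. econstructor; eauto. Qed.

Lemma walk_snoc : forall n x y z, walk E n x y -> E y z -> walk E (S n) x z.
Proof. intros. replace (S n) with (n+1) by lia. eapply walk_app; eauto. econstructor; eauto. constructor. Qed.

Lemma walk_rev : forall n x y, walk E n x y -> walk E n y x.
Proof. induction 1. constructor. eapply walk_snoc; eauto. Qed.

Lemma d_refl : forall x n, d x x n.
Proof. intros; exists 0; split; [lia|constructor]. Qed.

Lemma d_mono : forall x y n m, d x y n -> n <= m -> d x y m.
Proof. intros x y n m [k [? ?]] ?; exists k; split; auto; lia. Qed.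

Lemma d_tri : forall x y z n m, d x y n -> d y z m -> d x z (n+m).
Proof. intros x y z n m [k [? ?]] [k' [? ?]]; exists (k+k'); split; [lia|]. eapply walk_app; eauto. Qed.

Lemma d_sym : forall x y n, d x y n -> d y x n.
Proof. intros x y n [k [? ?]]; exists k; split; auto; apply walk_rev; auto. Qed.

Lemma d_E : forall x y, E x y -> d x y 1.
Proof. intros; exists 1; split; auto. econstructor; eauto; constructor. Qed.

Lemma d_conn : forall x y, exists n, d x y n.
Proof. intros x y; destruct (Hconn x y) as [n Hn]; exists n; exists n; auto. Qed.

Definition Bn (n : nat) : G -> Prop := fun x => d e x n.

Lemma bnd_ball : forall X, bnd X <-> exists n, forall x, X x -> Bn n x.
Proof.
  intro X; split.
  - intros [x0 [n H]]. destruct (d_conn e x0) as [k Hk]. exists (k+n). intros x Hx.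
    unfold Bn. eapply d_tri; eauto.
  - intros [n H]; exists e, n; auto.
Qed.

Lemma Bn_bnd : forall n, bnd (Bn n).
Proof. intros; apply bnd_ball; exists n; auto. Qed.

Lemma Bn_mono : forall n m x, Bn n x -> n <= m -> Bn m x.
Proof. intros; eapply d_mono; eauto. Qed.

Lemma bnd_sub : forall X Y, (forall x, X x -> Y x) -> bnd Y -> bnd X.
Proof. intros X Y H [x0 [n Hn]]; exists x0, n; auto. Qed.

Lemma bnd_union : forall X Y, bnd X -> bnd Y -> bnd (fun x => X x \/ Y x).
Proof.
  intros X Y HX HY. apply bnd_ball in HX as [n Hn]; apply bnd_ball in HY as [m Hm].
  apply bnd_ball; exists (n+m). intros x [H|H]; eapply Bn_mono; eauto; lia.
Qed.

Lemma bnd_empty : forall X, (forall x, ~ X x) -> bnd X.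
Proof. intros X H; exists e, 0; intros b Hb; exfalso; eapply H; eauto. Qed.

Lemma unbnd_nonempty : forall X, ~ bnd X -> exists x, X x.
Proof. intros X H. apply NNPP; intro H'. apply H, bnd_empty. intros x Hx; apply H'; eauto. Qed.

Lemma mulgV : forall x, mul x (inv x) = e.
Proof.
  destruct Hgrp as [A L V]. intro x.
  rewrite <- (L (mul x (inv x))). rewrite <- (V (inv x)) at 1.
  rewrite <- A. rewrite (A (inv x) x (inv x)). rewrite V. rewrite L. apply V.
Qed.

Lemma mulg1 : forall x, mul x e = x.
Proof.
  destruct Hgrp as [A L V]. intro x. rewrite <- (V x). rewrite A. rewrite mulgV. apply L.
Qed.

Lemma cross : forall n a a', walk E n a a' -> forall A : G -> Prop, A a -> ~ A a' ->
  exists u v, A u /\ ~ A v /\ E u v /\ d a v n.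
Proof.
  induction 1; intros A Ha Ha'.
  - contradiction.
  - destruct (classic (A y)) as [Hy|Hy].
    + destruct (IHwalk A Hy Ha') as [u [v [? [? [? Hv]]]]]. exists u, v; repeat split; auto.
      replace (S n) with (1 + n) by lia. eapply d_tri; eauto. apply d_E; auto.
    + exists x, y; repeat split; auto. eapply d_mono. apply d_E; auto. lia.
Qed.

Lemma CC_of_boundary : forall (A Bd : G -> Prop), bnd Bd ->
  (forall u v, A u -> ~ A v -> E u v -> Bd v) -> CC A.
Proof.
  intros A Bd HBd HA U [Hcov [B0 [HB0 HU]]].
  apply bnd_ball in HB0 as [n0 Hn0]. apply bnd_ball in HBd as [N HN].
  assert (diam : forall V, U V -> forall x y, V x -> V y -> d x y (n0 + n0)).
  { intros V HV x y Hx Hy. destruct (HU V HV) as [g Hg].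
    destruct (Hg x Hx) as [b1 [Hb1 ->]]. destruct (Hg y Hy) as [b2 [Hb2 ->]].
    apply Hinv. eapply d_tri. apply d_sym, Hn0; auto. apply Hn0; auto. }
  apply bnd_ball. exists (N + (n0+n0) + (n0+n0+(n0+n0))).
  intros x [[V1 [HV1 [Hx1 [a [Ha1 Ha]]]]] [V2 [HV2 [Hx2 [a' [Ha2 Ha']]]]]].
  assert (Haa : d a a' ((n0+n0)+(n0+n0))).
  { eapply d_tri. apply (diam V1 HV1 a x); auto. apply (diam V2 HV2 x a'); auto. }
  destruct Haa as [k [Hk Hw]].
  destruct (cross _ _ _ Hw A Ha Ha') as [u [v [Hu [Hv [Huv Hav]]]]].
  pose proof (HN v (HA u v Hu Hv Huv)).
  unfold Bn. eapply d_mono; [eapply d_tri; [exact H | apply d_sym; eapply d_tri; [apply (diam V1 HV1 x a); auto | exact Hav]] | lia].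
Qed.

Lemma boundary_of_CC : forall A, CC A -> exists n,
  forall u v, A u -> ~ A v -> E u v -> Bn n u /\ Bn n v.
Proof.
  intros A HA.
  set (U := fun V : G -> Prop => exists x y, d x y 1 /\ V = (fun z => z = x \/ z = y)).
  assert (HU : unif_bounded_cover E mul U).
  { split.
    - intro x. exists (fun z => z = x \/ z = x). split; auto. exists x, x; split; auto. apply d_refl.
    - exists (Bn 1). split. apply Bn_bnd.
      intros V [x [y [Hxy ->]]]. exists x. intros z [->| ->].
      + exists e; split. apply d_refl. symmetry; apply mulg1.
      + exists (mul (inv x) y); split.
        * unfold Bn. destruct Hgrp as [A' L V']. rewrite <- (V' x). apply Hinv; auto.
        * destruct Hgrp as [A' L V']. rewrite A', mulgV, L; auto. }
  destruct (proj1 (bnd_ball _) (HA U HU)) as [n Hn]. exists n.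
  intros u v Hu Hv Huv.
  assert (HV : U (fun z => z = u \/ z = v)) by (exists u, v; split; auto; apply d_E; auto).
  split; apply Hn; split; exists (fun z => z = u \/ z = v); repeat split; auto;
   solve [exists u; auto | exists v; auto].
Qed.

Lemma CC_compl : forall A, CC A -> CC (fun x => ~ A x).
Proof.
  intros A HA U HU. eapply bnd_sub; [|exact (HA U HU)].
  intros x [[V1 [? [? [a [? ?]]]]] [V2 [? [? [a' [? ?]]]]]].
  split; [exists V2 | exists V1]; repeat split; auto.
  exists a'; split; auto. apply NNPP; auto.
  exists a; auto.
Qed.

Definition closedB (B A : G -> Prop) : Prop :=
  (forall x, A x -> ~ B x) /\ (forall x y, A x -> ~ B y -> d x y 1 -> A y).

Lemma closedB_CC : forall B A, bnd B -> closedB B A -> CC A.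
Proof.
  intros B A HB [H1 H2]. apply (CC_of_boundary A B HB).
  intros u v Hu Hv Huv. apply NNPP; intro Hb. apply Hv. eapply H2; eauto. apply d_E; auto.
Qed.


Lemma chain1_in : forall A x y, chain1 E A x y -> A x /\ A y.
Proof. induction 1; tauto. Qed.

Lemma chain1_trans : forall A x y z, chain1 E A x y -> chain1 E A y z -> chain1 E A x z.
Proof. intros A x y z H1 H2. induction H2; auto. eapply chain1_step; eauto. Qed.

Lemma chain1_sym : forall A x y, chain1 E A x y -> chain1 E A y x.
Proof.
  induction 1. constructor; auto.
  eapply chain1_trans; [|exact IHchain1].
  eapply chain1_step. constructor; auto. apply (chain1_in _ _ _ H). apply d_sym; auto.
Qed.

Lemma chain_mono : forall (A A' : G -> Prop), (forall x, A x -> A' x) ->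
  forall x y, chain1 E A x y -> chain1 E A' x y.
Proof. intros A A' HA x y H; induction H. constructor; auto. eapply chain1_step; eauto. Qed.

Lemma comp_meet : forall A C C', is_comp1 E A C -> is_comp1 E A C' ->
  (exists z, C z /\ C' z) -> C = C'.
Proof.
  intros A C C' [x [Hx ->]] [x' [Hx' ->]] [z [Hz Hz']].
  unfold comp1 in *. extensionality w. apply propositional_extensionality. split; intro H.
  - eapply chain1_trans; [exact Hz'|]. eapply chain1_trans; [apply chain1_sym; exact Hz|exact H].
  - eapply chain1_trans; [exact Hz|]. eapply chain1_trans; [apply chain1_sym; exact Hz'|exact H].
Qed.

Lemma comp_closedB : forall B C, is_comp1 E (fun x => ~ B x) C -> closedB B C.
Proof.
  intros B C [x [Hx ->]]. split.
  - intros y Hy. apply (chain1_in _ _ _ Hy).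
  - intros y z Hy Hz Hyz. eapply chain1_step; eauto.
Qed.

Notation adm := (admissible_family E mul).
Notation EndsT := (Ends E mul).
Definition mem (p : EndsT) (A : G -> Prop) : Prop := proj1_sig p A.

Lemma adm_sub : forall (F1 F2 : (G -> Prop) -> Prop), (forall X, F2 X -> F1 X) -> adm F1 -> adm F2.
Proof.
  intros F1 F2 H [H1 H2]. split; auto.
Qed.

Lemma list_inter_cons : forall (A : G -> Prop) l x, list_inter (A :: l) x <-> A x /\ list_inter l x.
Proof.
  intros; unfold list_inter; simpl; split.
  - intro H; split; [apply H; left; reflexivity | intros X HX; apply H; right; exact HX].
  - intros [H1 H2] X [HX|HX]; [subst; exact H1 | apply H2; exact HX].
Qed.

Lemma list_inter_app : forall (l l' : list (G -> Prop)) x, list_inter l x -> list_inter l' x -> list_inter (l ++ l') x.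
Proof. intros l l' x H H' X HX. apply in_app_or in HX as [HX|HX]; [apply H|apply H']; exact HX. Qed.

Lemma sub_list : forall (F : (G -> Prop) -> Prop) (A : G -> Prop) l,
  (forall X, In X l -> F X \/ X = A) ->
  exists l', (forall X, In X l' -> F X) /\ forall x, A x -> list_inter l' x -> list_inter l x.
Proof.
  intros F A l; induction l as [|X l IH]; intros Hl.
  - exists nil; split. simpl; tauto. intros x _ _ Y [].
  - destruct IH as [l' [H1 H2]]. intros Y HY; apply Hl; simpl; auto.
    destruct (Hl X (or_introl eq_refl)) as [HX| ->].
    + exists (X :: l'); split.
      * intros Y [<-|HY]; auto.
      * intros x Hx Hi. apply list_inter_cons. apply list_inter_cons in Hi as [? ?]. auto.
    + exists l'; split; auto. intros x Hx Hi. apply list_inter_cons; auto.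
Qed.

Lemma end_adm : forall p : EndsT, adm (proj1_sig p).
Proof. intro p; exact (proj1 (proj2_sig p)). Qed.

Lemma end_unbnd : forall p A, mem p A -> ~ bnd A.
Proof. intros p A H; apply (proj1 (end_adm p) A H). Qed.

Lemma end_CC : forall p A, mem p A -> CC A.
Proof. intros p A H; apply (proj1 (end_adm p) A H). Qed.

Lemma end_list : forall p l, (forall X, In X l -> mem p X) -> ~ bnd (list_inter l).
Proof. intros p l H; apply (proj2 (end_adm p) l H). Qed.

Lemma END_ADD : forall (p : EndsT) A, CC A ->
  (forall l, (forall X, In X l -> mem p X) -> ~ bnd (fun x => A x /\ list_inter l x)) -> mem p A.
Proof.
  intros p A HA H.
  set (F' := fun X => proj1_sig p X \/ X = A).
  assert (Hadm : adm F').
  { split.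
    - intros X [HX| ->]. split; [eapply end_CC|eapply end_unbnd]; eauto.
      split; auto. intro Hb. apply (H nil). simpl; tauto. eapply bnd_sub; [|exact Hb]. tauto.
    - intros l Hl. destruct (sub_list (proj1_sig p) A l Hl) as [l' [H1 H2]].
      intro Hb. apply (H l' H1). eapply bnd_sub; [|exact Hb]. intros x [? ?]; auto. }
  destruct (proj2_sig p) as [_ Hmax]. apply (Hmax F' Hadm). intros X HX; left; auto. right; auto.
Qed.

Lemma SUP : forall (p : EndsT) A A', mem p A' -> (forall x, A' x -> A x) -> CC A -> mem p A.
Proof.
  intros p A A' H' Hsub HA. apply END_ADD; auto. intros l Hl Hb.
  apply (end_list p (A' :: l)). intros X [<-|HX]; auto.
  eapply bnd_sub; [|exact Hb]. intros x Hx. apply list_inter_cons in Hx as [? ?]; auto.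
Qed.

Lemma UF : forall (p : EndsT) A, CC A -> mem p A \/ mem p (fun x => ~ A x).
Proof.
  intros p A HA. destruct (classic (mem p A)) as [?|H1]; auto. right.
  apply END_ADD. apply CC_compl; auto. intros l Hl Hb. apply H1. apply END_ADD; auto.
  intros l' Hl' Hb'. apply (end_list p (l ++ l')).
  intros X HX; apply in_app_or in HX as [?|?]; auto.
  eapply bnd_sub; [|exact (bnd_union _ _ Hb Hb')]. intros x Hx.
  destruct (classic (A x)).
  - right; split; auto. intros X HX; apply Hx, in_or_app; auto.
  - left; split; auto. intros X HX; apply Hx, in_or_app; auto.
Qed.

Lemma DISJ : forall (p : EndsT) X Y, mem p X -> mem p Y -> ~ bnd (fun x => X x /\ Y x).
Proof.
  intros p X Y HX HY Hb. apply (end_list p (X :: Y :: nil)).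
  intros Z [<-|[<-|[]]]; auto.
  eapply bnd_sub; [|exact Hb]. intros x Hx. split; apply Hx; simpl; auto.
Qed.

Lemma DISJ_ex : forall (p : EndsT) X Y, mem p X -> mem p Y -> exists x, X x /\ Y x.
Proof. intros. apply unbnd_nonempty. eapply DISJ; eauto. Qed.

Lemma PRIME : forall (p : EndsT) X Y, CC X -> CC Y -> mem p (fun x => X x \/ Y x) ->
  mem p X \/ mem p Y.
Proof.
  intros p X Y HX HY H. destruct (UF p X HX) as [?|H1]; auto. destruct (UF p Y HY) as [?|H2]; auto.
  exfalso. destruct (DISJ_ex p _ _ H H1) as [x [Hx Hx1]].
  assert (Y x) by tauto.
  destruct (DISJ_ex p _ _ H1 H2) as [z [Hz1 Hz2]].
  apply (end_list p ((fun x => X x \/ Y x) :: (fun x => ~ X x) :: (fun x => ~ Y x) :: nil)).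
  intros Z [<-|[<-|[<-|[]]]]; auto.
  apply bnd_empty. intros w Hw.
  assert (A1 := Hw _ (or_introl eq_refl)). assert (A2 := Hw _ (or_intror (or_introl eq_refl))).
  assert (A3 := Hw _ (or_intror (or_intror (or_introl eq_refl)))). simpl in *; tauto.
Qed.

Lemma mem_full : forall (p : EndsT), mem p (fun _ => True).
Proof.
  intro p. apply END_ADD.
  - apply (closedB_CC (fun _ => False)). apply bnd_empty; intros x H; exact H.
    split; [intros x _ H; exact H | intros; exact I].
  - intros l Hl Hb. apply (end_list p l Hl). eapply bnd_sub; [|exact Hb]. intros x Hx; split; auto.
Qed.

Lemma EXT : forall (F0 : (G -> Prop) -> Prop), (forall X, F0 X -> CC X) ->
  (forall l, (forall X, In X l -> F0 X) -> ~ bnd (list_inter l)) ->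
  exists p : EndsT, forall X, F0 X -> mem p X.
Proof.
  intros F0 HCC HFIP.
  assert (HF0 : adm F0).
  { split; auto. intros X HX; split; auto. intro Hb. apply (HFIP (X :: nil)).
    intros Y [<-|[]]; auto. eapply bnd_sub; [|exact Hb]. intros x Hx; apply Hx; simpl; auto. }
  set (P := fun (X : (G -> Prop) -> Prop) => adm (fun Y => X Y \/ F0 Y)).
  destruct (@classical_sets.Zorn_bigcup (G -> Prop) P) as [A [HA Hmax]].
  - intros F HFP Htot. unfold P.
    assert (Hl : forall l, (forall Y, In Y l -> classical_sets.bigcup F (fun X => X) Y \/ F0 Y) ->
       exists X0, (F X0 \/ forall Y, ~ X0 Y) /\ forall Y, In Y l -> X0 Y \/ F0 Y).
    { induction l as [|Y l IH]; intros Hl.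
      - exists (fun _ => False); split; [right; intros Y H; exact H | intros Y []].
      - destruct IH as [X0 [HX0 HX0l]]. intros Z HZ; apply Hl; simpl; auto.
        destruct (Hl Y (or_introl eq_refl)) as [[X1 HX1 HY]|HY].
        + destruct HX0 as [HX0|HX0].
          * destruct (Htot X0 X1 HX0 HX1) as [S|S].
            -- exists X1; split; auto. intros Z [<-|HZ]; auto. destruct (HX0l Z HZ); auto.
            -- exists X0; split; auto. intros Z [<-|HZ]; auto.
          * exists X1; split; auto. intros Z [<-|HZ]; auto. destruct (HX0l Z HZ) as [H|H]; auto.
            exfalso; eapply HX0; eauto.
        + exists X0; split; auto. intros Z [<-|HZ]; auto. }
    split.
    + intros Y [[X1 HX1 HY]|HY].
      * apply (proj1 (HFP X1 HX1) Y); auto.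
      * apply (proj1 HF0 Y HY).
    + intros l Hlst. destruct (Hl l Hlst) as [X0 [[HX0|HX0] HX0l]].
      * apply (proj2 (HFP X0 HX0) l HX0l).
      * apply HFIP. intros Y HY. destruct (HX0l Y HY) as [H|H]; auto. exfalso; eapply HX0; eauto.
  - set (pF := fun Y => A Y \/ F0 Y).
    assert (Hend : is_end E mul pF).
    { split; auto. intros F' HF' Hsub Y HY.
      apply NNPP; intro HnY.
      apply (Hmax F').
      - split. intros Z HZ; apply Hsub; left; auto.
        intro HFA. apply HnY. left. apply HFA; auto.
      - unfold P. eapply adm_sub; [|exact HF']. intros Z [HZ|HZ]; auto. apply Hsub; right; auto. }
    exists (exist _ pF Hend). intros X HX. unfold mem; simpl. right; auto.
Qed.

Lemma closedB_or : forall B X Y, closedB B X -> closedB B Y -> closedB B (fun x => X x \/ Y x).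
Proof.
  intros B X Y [X1 X2] [Y1 Y2]; split.
  - intros x [H|H]; auto.
  - intros x y [H|H] Hy Hxy; [left; eapply X2|right; eapply Y2]; eauto.
Qed.

Lemma union_closedB : forall B (P : (G -> Prop) -> Prop), (forall C, P C -> closedB B C) ->
  closedB B (fun x => exists C, P C /\ C x).
Proof.
  intros B P HP; split.
  - intros x [C [HC Hx]]. apply (proj1 (HP C HC)); auto.
  - intros x y [C [HC Hx]] Hy Hxy. exists C; split; auto. eapply (proj2 (HP C HC)); eauto.
Qed.

Lemma compl_closedB : forall B, closedB B (fun x => ~ B x).
Proof. intros B; split; auto. Qed.

Lemma list_pick : forall (p : EndsT) (Q : (G -> Prop) -> Prop) B, bnd B ->
  (forall C, Q C -> closedB B C) -> forall l,
  mem p (fun x => exists C, In C l /\ Q C /\ C x) -> exists C, In C l /\ Q C /\ mem p C.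
Proof.
  intros p Q B HB HQ l; induction l as [|X l IH]; intros Hm.
  - exfalso. apply (end_unbnd p _ Hm). apply bnd_empty. intros x [C [[] _]].
  - assert (Hcl : closedB B (fun x => exists C, In C l /\ Q C /\ C x)).
    { assert (H := union_closedB B (fun C => In C l /\ Q C) (fun C HC => HQ C (proj2 HC))).
      destruct H as [H1 H2]; split.
      - intros x [C [? [? ?]]]. apply (H1 x); exists C; tauto.
      - intros x y [C [? [? ?]]] Hy Hxy. destruct (H2 x y) as [C' [[? ?] ?]]; eauto. }
    destruct (classic (Q X)) as [HX|HX].
    + assert (Hm' : mem p (fun x => X x \/ exists C, In C l /\ Q C /\ C x)).
      { eapply SUP. exact Hm. intros x [C [[<-|HC] [HQC Hx]]]; auto. right; eauto.
        apply (closedB_CC B); auto. apply closedB_or; auto. }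
      destruct (PRIME p _ _ (closedB_CC B _ HB (HQ X HX)) (closedB_CC B _ HB Hcl) Hm') as [H|H].
      * exists X; simpl; auto.
      * destruct (IH H) as [C [? ?]]. exists C; simpl; auto.
    + assert (Hm' : mem p (fun x => exists C, In C l /\ Q C /\ C x)).
      { eapply SUP. exact Hm. intros x [C [[<-|HC] [HQC Hx]]]. contradiction. eauto.
        apply (closedB_CC B); auto. }
      destruct (IH Hm') as [C [? ?]]. exists C; simpl; auto.
Qed.

Definition Dl n (p q : EndsT) : Prop := exists C, is_comp1 E (fun x => ~ Bn n x) C /\
  ~ bnd C /\ mem p C /\ ~ mem q C.

Lemma mem_outside : forall (p : EndsT) n, mem p (fun x => ~ Bn n x).
Proof.
  intros p n. apply END_ADD. apply (closedB_CC (Bn n)). apply Bn_bnd. apply compl_closedB.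
  intros l Hl Hb. apply (end_list p l Hl). eapply bnd_sub; [|exact (bnd_union _ _ (Bn_bnd n) Hb)].
  intros x Hx. destruct (classic (Bn n x)); [left|right]; auto.
Qed.

Lemma comp_is_comp : forall A x, A x -> is_comp1 E A (comp1 E A x) /\ comp1 E A x x.
Proof. intros A x Hx. split. exists x; auto. constructor; auto. Qed.

Lemma comp_chain : forall A C, is_comp1 E A C -> forall y z, C y -> C z -> chain1 E A y z.
Proof.
  intros A C [x [Hx ->]] y z Hy Hz. eapply chain1_trans; [apply chain1_sym; exact Hy| exact Hz].
Qed.

Lemma d1_cases : forall x y, d x y 1 -> x = y \/ E x y.
Proof.
  intros x y [m [Hm Hw]]. inversion Hw; subst. left; auto.
  inversion H0; subst. right; auto. lia.
Qed.

Lemma chain_stays : forall n (U : G -> Prop),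
  (forall u v, U u -> ~ U v -> E u v -> Bn n v) ->
  forall z y, chain1 E (fun x => ~ Bn n x) z y -> U z -> U y.
Proof.
  intros n U HU z y H; induction H as [Hx | w w' Hc IH Hw' Hww']; intros Hz; auto.
  specialize (IH Hz). apply NNPP; intro Hn.
  destruct (d1_cases _ _ Hww') as [<-|He]; auto. apply Hw'. apply (HU w w'); auto.
Qed.

Section Metr.
Hypothesis HM1 : forall n, bnd (union_bounded_comps E (fun x => ~ Bn n x)).
Hypothesis HM2 : forall n, finite_family (fun C => is_comp1 E (fun x => ~ Bn n x) C /\ ~ bnd C).

Lemma level_comp : forall (p : EndsT) n, exists C, is_comp1 E (fun x => ~ Bn n x) C /\ ~ bnd C /\ mem p C.
Proof.
  intros p n. set (S := fun x => ~ Bn n x).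
  set (Q := fun C => is_comp1 E S C /\ ~ bnd C).
  destruct (HM2 n) as [l Hl].
  assert (HQ : forall C, Q C -> closedB (Bn n) C) by (intros C [HC _]; apply comp_closedB; auto).
  assert (HY : mem p (fun x => exists C, In C l /\ Q C /\ C x)).
  { assert (Hcl : closedB (Bn n) (fun x => exists C, In C l /\ Q C /\ C x)).
    { destruct (union_closedB (Bn n) (fun C => In C l /\ Q C) (fun C HC => HQ C (proj2 HC))) as [A1 A2].
      split.
      - intros x [C [? [? ?]]]. apply (A1 x); exists C; tauto.
      - intros x y [C [? [? ?]]] Hy Hxy. destruct (A2 x y) as [C' [[? ?] ?]]; eauto. }
    destruct (UF p _ (closedB_CC _ _ (Bn_bnd n) Hcl)) as [?|Hc]; auto. exfalso.
    apply (DISJ p _ _ (mem_outside p n) Hc). eapply bnd_sub; [|exact (HM1 n)].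
    intros x [Hx HnY]. destruct (comp_is_comp S x Hx) as [Hc1 Hc2].
    destruct (classic (bnd (comp1 E S x))) as [Hb|Hb].
    - exists (comp1 E S x); auto.
    - exfalso. apply HnY. exists (comp1 E S x). split; [apply Hl|]; split; auto; split; auto. }
  destruct (list_pick p Q (Bn n) (Bn_bnd n) HQ l HY) as [C [_ [[? ?] ?]]].
  exists C; auto.
Qed.

Lemma Dl_refl : forall n p, ~ Dl n p p.
Proof. intros n p [C [_ [_ [? ?]]]]; auto. Qed.

Lemma level_unique : forall n (p : EndsT) C C', is_comp1 E (fun x => ~ Bn n x) C ->
  is_comp1 E (fun x => ~ Bn n x) C' -> mem p C -> mem p C' -> C = C'.
Proof. intros. eapply comp_meet; eauto. eapply DISJ_ex; eauto. Qed.

Lemma Dl_sym : forall n p q, Dl n p q -> Dl n q p.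
Proof.
  intros n p q [C [HC [HCb [HpC HqC]]]].
  destruct (level_comp q n) as [C' [HC' [HC'b HqC']]].
  exists C'; repeat split; auto. intro HpC'. apply HqC.
  rewrite (level_unique n p C C'); auto.
Qed.

Lemma Dl_split : forall n p q r, Dl n p r -> Dl n p q \/ Dl n q r.
Proof.
  intros n p q r [C [HC [HCb [HpC HrC]]]]. destruct (classic (mem q C)).
  right; exists C; auto. left; exists C; auto.
Qed.

Lemma Dl_mono : forall n p q, Dl n p q -> Dl (S n) p q.
Proof.
  intros n p q [C [HC [HCb [HpC HqC]]]].
  destruct (level_comp p (S n)) as [C1 [HC1 [HC1b HpC1]]].
  exists C1; repeat split; auto. intro HqC1. apply HqC.
  eapply SUP; [exact HqC1| |apply (closedB_CC (Bn n)); [apply Bn_bnd|apply comp_closedB; auto]].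
  destruct (DISJ_ex p _ _ HpC HpC1) as [z [Hz Hz1]].
  intros y Hy. destruct HC as [xc [Hxc ->]].
  eapply chain1_trans; [exact Hz|].
  eapply chain_mono; [|apply (comp_chain _ _ HC1 z y Hz1 Hy)].
  intros x Hx Hb. apply Hx. eapply Bn_mono; eauto.
Qed.

Lemma Dl_mono_le : forall k n p q, k <= n -> Dl k p q -> Dl n p q.
Proof. intros k n p q Hk; induction Hk; auto. intro; apply Dl_mono; auto. Qed.

Lemma transfer : forall U n (p q : EndsT), (forall u v, U u -> ~ U v -> E u v -> Bn n v) ->
  mem p U -> ~ Dl n p q -> mem q U.
Proof.
  intros U n p q HU HpU HD.
  destruct (level_comp p n) as [C [HC [HCb HpC]]].
  destruct (DISJ_ex p _ _ HpC HpU) as [z [Hz HzU]].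
  assert (HqC : mem q C) by (apply NNPP; intro; apply HD; exists C; auto).
  eapply SUP; [exact HqC| |eapply end_CC; eauto].
  intros y Hy. eapply chain_stays; eauto. eapply comp_chain; eauto.
Qed.

Lemma agree_eq : forall p q : EndsT, (forall n, ~ Dl n p q) -> p = q.
Proof.
  intros p q H.
  assert (Hpq : forall (p q : EndsT), (forall n, ~ Dl n p q) -> forall A, mem p A -> mem q A).
  { intros p' q' H' A HA. destruct (boundary_of_CC A (end_CC p' A HA)) as [n Hn].
    eapply (transfer A n); eauto. intros; apply (Hn u v); auto. }
  assert (Hqp : forall n, ~ Dl n q p) by (intros n Hd; apply (H n), Dl_sym; auto).
  destruct p as [Fp Hp], q as [Fq Hq].
  assert (Fp = Fq).
  { extensionality A. apply propositional_extensionality. split.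
    apply (Hpq _ _ H). apply (Hpq _ _ Hqp). }
  subst. f_equal. apply proof_irrelevance.
Qed.

Lemma agree_level : forall N (p q : EndsT) C, is_comp1 E (fun x => ~ Bn N x) C ->
  mem p C -> mem q C -> forall k, k <= N -> ~ Dl k p q.
Proof.
  intros N p q C HC HpC HqC k Hk HD. apply (Dl_mono_le k N) in HD; auto.
  destruct HD as [C' [HC' [_ [HpC' HqC']]]]. apply HqC'.
  rewrite <- (level_unique N p C C'); auto.
Qed.


Lemma least : forall P : nat -> Prop, (exists n, P n) -> exists n, P n /\ forall k, k < n -> ~ P k.
Proof.
  intros P [n Hn]. apply NNPP; intro Hno.
  assert (forall m k, k <= m -> ~ P k).
  { induction m; intros k Hk HP.
    - apply Hno; exists k; split; auto. intros; lia.
    - destruct (Nat.eq_dec k (S m)).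
      + subst. apply Hno; exists (S m); split; auto. intros k Hk'. apply IHm; lia.
      + apply (IHm k); auto; lia. }
  apply (H n n); auto.
Qed.

Definition mt (p q : EndsT) : R :=
  match excluded_middle_informative (exists n, Dl n p q) with
  | left H => / (INR (proj1_sig (constructive_indefinite_description _ (least _ H))) + 1)
  | right _ => 0
  end.

Lemma mt_spec : forall p q, ((forall n, ~ Dl n p q) /\ mt p q = 0%R) \/
  exists n, Dl n p q /\ (forall k, k < n -> ~ Dl k p q) /\ mt p q = (/ (INR n + 1))%R.
Proof.
  intros p q. unfold mt. destruct (excluded_middle_informative _) as [H|H].
  - right. destruct (constructive_indefinite_description _ _) as [n [Hn Hl]]. simpl. eauto.
  - left. split; auto. intros n Hn; apply H; eauto.
Qed.

Lemma posn : forall n, (0 < INR n + 1)%R.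
Proof. intro n. pose proof (pos_INR n). lra. Qed.

Lemma inv_le : forall k n, k <= n -> (/ (INR n + 1) <= / (INR k + 1))%R.
Proof. intros k n H. apply Rinv_le_contravar. apply posn. apply le_INR in H. lra. Qed.

Lemma inv_pos : forall n, (0 < / (INR n + 1))%R.
Proof. intro; apply Rinv_0_lt_compat, posn. Qed.

Lemma mt_nonneg : forall p q, (0 <= mt p q)%R.
Proof. intros p q. destruct (mt_spec p q) as [[_ ->]|[n [_ [_ ->]]]]. lra. left; apply inv_pos. Qed.

Lemma least_uniq : forall (P : nat -> Prop) n n', P n -> (forall k, k < n -> ~ P k) ->
  P n' -> (forall k, k < n' -> ~ P k) -> n = n'.
Proof.
  intros P n n' H1 H2 H3 H4. destruct (lt_eq_lt_dec n n') as [[?|?]|?]; auto.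
  exfalso; eapply H4; eauto. exfalso; eapply H2; eauto.
Qed.

Lemma mt_sym : forall p q, mt p q = mt q p.
Proof.
  intros p q. assert (Hs : forall n, Dl n p q <-> Dl n q p) by (split; apply Dl_sym).
  destruct (mt_spec p q) as [[A1 ->]|[n [A1 [A2 ->]]]];
  destruct (mt_spec q p) as [[B1 ->]|[n' [B1 [B2 ->]]]]; auto.
  - exfalso; apply (A1 n'), Hs; auto.
  - exfalso; apply (B1 n), Hs; auto.
  - rewrite (least_uniq (fun k => Dl k p q) n n'); auto.
    apply Hs; auto. intros k Hk Hd; apply (B2 k Hk), Hs; auto.
Qed.

Lemma mt_le_level : forall p q n, (forall k, k <= n -> ~ Dl k p q) -> (mt p q <= / (INR (S n) + 1))%R.
Proof.
  intros p q n H. destruct (mt_spec p q) as [[_ ->]|[n0 [A1 [_ ->]]]].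
  - left; apply inv_pos.
  - apply inv_le. destruct (le_lt_dec n0 n); [exfalso; eapply H; eauto|lia].
Qed.

Lemma mt_tri : forall p q r, (mt p r <= mt p q + mt q r)%R.
Proof.
  intros p q r. pose proof (mt_nonneg p q). pose proof (mt_nonneg q r).
  destruct (mt_spec p r) as [[_ ->]|[n [A1 [A2 ->]]]]. lra.
  destruct (Dl_split n p q r A1) as [Hd|Hd].
  - destruct (mt_spec p q) as [[B1 _]|[n' [B1 [B2 Hm]]]]. exfalso; eapply B1; eauto.
    rewrite Hm. assert (Hle : n' <= n) by (destruct (le_lt_dec n' n); auto; exfalso; eapply B2; eauto).
    pose proof (inv_le n' n Hle). lra.
  - destruct (mt_spec q r) as [[B1 _]|[n' [B1 [B2 Hm]]]]. exfalso; eapply B1; eauto.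
    rewrite Hm. assert (Hle : n' <= n) by (destruct (le_lt_dec n' n); auto; exfalso; eapply B2; eauto).
    pose proof (inv_le n' n Hle). lra.
Qed.

Lemma mt_zero : forall p q, mt p q = 0%R <-> p = q.
Proof.
  intros p q; split.
  - intro H. destruct (mt_spec p q) as [[A1 _]|[n [_ [_ Hm]]]].
    + apply agree_eq; auto.
    + pose proof (inv_pos n). lra.
  - intros <-. destruct (mt_spec p p) as [[_ ?]|[n [A1 _]]]; auto. exfalso; eapply Dl_refl; eauto.
Qed.

Lemma metrizable : metrizable_ends E mul.
Proof.
  exists mt. split; [exact mt_zero|]. split; [exact mt_sym|]. split; [exact mt_tri|].
  intro O; split.
  - intros HO p Hp. destruct (HO p Hp) as [U [HU [HpU HUO]]].
    destruct (boundary_of_CC U HU) as [n Hn].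
    exists (/ (INR n + 1))%R. split. apply inv_pos.
    intros q Hq. apply HUO. apply (transfer U n p q); auto.
    intros u v ? ? ?; apply (Hn u v); auto.
    intro HD. destruct (mt_spec p q) as [[B1 _]|[n' [B1 [B2 Hm]]]]. eapply B1; eauto.
    rewrite Hm in Hq. assert (n < n').
    { destruct (le_lt_dec n' n); auto. exfalso. pose proof (inv_le n' n l). lra. }
    eapply B2; eauto.
  - intros HO p Hp. destruct (HO p Hp) as [eps [Heps Hball]].
    destruct (archimed_cor1 eps Heps) as [N [HN HN0]].
    destruct (level_comp p N) as [C [HC [_ HpC]]].
    exists C. split. apply (closedB_CC (Bn N)). apply Bn_bnd. apply comp_closedB; auto.
    split; auto. intros q HqC. apply Hball.
    pose proof (mt_le_level p q N (agree_level N p q C HC HpC HqC)).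
    assert (/ (INR (S N) + 1) < / INR N)%R.
    { apply Rinv_lt_contravar. apply lt_0_INR in HN0. pose proof (posn (S N)). nra.
      rewrite S_INR. lra. }
    lra.
Qed.

End Metr.

Lemma CC_full : CC (fun _ => True).
Proof.
  apply (closedB_CC (fun _ => False)). apply bnd_empty; intros x H; exact H.
  split; [intros x _ H; exact H | intros; exact I].
Qed.

Lemma CL : forall (I : Type) (Op : I -> EndsT -> Prop) W, (forall i, @ends_open G E mul (Op i)) -> CC W ->
  (forall p, mem p W -> exists i, Op i p) ->
  exists L : list I, (forall i, In i L -> exists p, Op i p) /\ forall q, mem q W -> exists i, In i L /\ Op i q.
Proof.
  intros I Op W Hopen HW Hcov. apply NNPP; intro Hno.
  set (F0 := fun A => A = W \/ exists U p' i, CC U /\ mem p' U /\ (forall q, mem q U -> Op i q) /\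
     A = (fun x => ~ U x)).
  assert (FIP : forall l, (forall X, In X l -> F0 X) -> ~ bnd (list_inter l)).
  { intros l Hl Hb.
    assert (HL : exists L, (forall i, In i L -> exists p, Op i p) /\ forall A, In A l -> A = W \/
       exists U i, In i L /\ CC U /\ (forall q, mem q U -> Op i q) /\ A = (fun x => ~ U x)).
    { clear Hb. induction l as [|A l IH].
      - exists nil; split; [intros i []|intros A []].
      - destruct IH as [L [HL1 HL2]]. intros X HX; apply Hl; simpl; auto.
        destruct (Hl A (or_introl eq_refl)) as [->|[U [p' [i [HU [Hp'U [HUi ->]]]]]]].
        + exists L; split; auto. intros A [<-|HA]; auto.
        + exists (i :: L); split.
          * intros i' [<-|Hi']; [exists p'; apply HUi; auto | auto].
          * intros A [<-|HA]. right; exists U, i; simpl; auto.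
            destruct (HL2 A HA) as [?|[U' [i' [? ?]]]]; auto. right; exists U', i'; simpl; auto. }
    destruct HL as [L [HL1 HL2]]. apply Hno. exists L; split; auto.
    intros q HqW. apply NNPP; intro Hq. apply (end_list q l); [|exact Hb].
    intros A HA. destruct (HL2 A HA) as [->|[U [i [HiL [HU [HUi ->]]]]]]; auto.
    destruct (UF q U HU) as [HqU|?]; auto. exfalso; apply Hq; eauto. }
  destruct (EXT F0) as [r Hr].
  - intros X [->|[U [_ [_ [HU [_ [_ ->]]]]]]]; auto. apply CC_compl; auto.
  - exact FIP.
  - assert (HrW : mem r W) by (apply Hr; left; auto).
    destruct (Hcov r HrW) as [i Hi]. destruct (Hopen i r Hi) as [U [HU [HrU HUO]]].
    assert (HrnU : mem r (fun x => ~ U x)) by (apply Hr; right; exists U, r, i; auto).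
    destruct (DISJ_ex r _ _ HrU HrnU) as [x [? ?]]; auto.
Qed.

Fixpoint enc (l : list (nat * nat)) : nat :=
  match l with
  | nil => 0
  | (a, b) :: l' => S (to_nat (to_nat (a, b), enc l'))
  end.

Lemma enc_inj : forall l l', enc l = enc l' -> l = l'.
Proof.
  induction l as [|[a b] l IH]; intros [|[a' b'] l'] H; cbn [enc] in H; try discriminate; auto.
  apply Nat.succ_inj in H. apply (f_equal of_nat) in H. rewrite !cancel_of_to in H.
  apply pair_equal_spec in H as [H H']. apply (f_equal of_nat) in H. rewrite !cancel_of_to in H.
  injection H as -> ->. f_equal. apply IH; auto.
Qed.

Lemma cantor : forall h : (nat -> bool) -> nat, (forall f g, h f = h g -> forall i, f i = g i) -> False.
Proof.
  intros h Hh.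
  set (pick := fun k => epsilon (inhabits (fun _ : nat => false)) (fun f => h f = k)).
  set (g := fun k => negb (pick k k)).
  assert (Hp : h (pick (h g)) = h g).
  { unfold pick. apply (epsilon_spec (inhabits (fun _ : nat => false)) (fun f => h f = h g)).
    exists g; reflexivity. }
  pose proof (Hh _ _ Hp (h g)) as H.
  assert (no_fix : forall b, b = negb b -> False) by (intros [|] Hb; discriminate).
  exact (no_fix _ H).
Qed.

Section NonMetr.
Variable m : EndsT -> EndsT -> R.
Hypothesis Hm0 : forall p q, m p q = 0%R <-> p = q.
Hypothesis Hms : forall p q, m p q = m q p.
Hypothesis Hmt : forall p q r, (m p r <= m p q + m q r)%R.
Hypothesis Hmo : forall O, @ends_open G E mul O <->
       (forall p, O p -> exists eps, (0 < eps)%R /\ forall q, (m p q < eps)%R -> O q).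

Lemma m_pp : forall p, m p p = 0%R.
Proof. intro p; apply Hm0; auto. Qed.

Lemma ball_open : forall c r, @ends_open G E mul (fun q => (m c q < r)%R).
Proof.
  intros c r. apply Hmo. intros p Hp. exists (r - m c p)%R. split. lra.
  intros q Hq. pose proof (Hmt c p q). lra.
Qed.

Lemma open_and : forall (P : Prop) O, @ends_open G E mul O -> @ends_open G E mul (fun q => O q /\ P).
Proof.
  intros P O HO p [Hp HP]. destruct (HO p Hp) as [U [HU [HpU HUO]]]. exists U; repeat split; auto.
Qed.

Lemma net : forall n, exists l : list EndsT, forall q, exists c, In c l /\ (m c q < / (INR n + 1))%R.
Proof.
  intro n. destruct (CL EndsT (fun c q => (m c q < / (INR n + 1))%R) (fun _ => True)) as [L [_ HL]].
  - intro; apply ball_open.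
  - apply CC_full.
  - intros p _. exists p. rewrite m_pp. apply inv_pos.
  - exists L. intros q. destruct (HL q (mem_full q)) as [c [? ?]]; eauto.
Qed.

Section Core.
Variable B : G -> Prop.
Variable K : nat -> G -> Prop.
Hypothesis HB : bnd B.
Hypothesis HK1 : forall n, closedB B (K n).
Hypothesis HK2 : forall n n' x, K n x -> K n' x -> n = n'.
Hypothesis HK3 : forall i, ~ bnd (fun x => exists j, K (to_nat (i, j)) x).

Definition W (f : nat -> bool) : G -> Prop := fun x => exists n, f (fst (of_nat n)) = true /\ K n x.
Definition Dset (i : nat) : G -> Prop := fun x => exists j, K (to_nat (i, j)) x.

Lemma W_CC : forall f, CC (W f).
Proof.
  intro f. apply (closedB_CC B); auto. split.
  - intros x [n [_ Hx]]. apply (proj1 (HK1 n)); auto.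
  - intros x y [n [Hf Hx]] Hy Hxy. exists n; split; auto. eapply (proj2 (HK1 n)); eauto.
Qed.

Lemma D_CC : forall i, CC (Dset i).
Proof.
  intro i. apply (closedB_CC B); auto. split.
  - intros x [j Hx]. apply (proj1 (HK1 (to_nat (i, j))) x); auto.
  - intros x y [j Hx] Hy Hxy. exists j. eapply (proj2 (HK1 (to_nat (i, j)))); eauto.
Qed.

Lemma end_D : forall i, exists p : EndsT, mem p (Dset i).
Proof.
  intro i. destruct (EXT (fun X => X = Dset i)) as [p Hp].
  - intros X ->; apply D_CC.
  - intros l Hl Hb. apply (HK3 i). eapply bnd_sub; [|exact Hb]. intros x Hx X HX.
    rewrite (Hl X HX). exact Hx.
  - exists p; apply Hp; auto.
Qed.

Lemma distinct : forall f g i, f i = true -> g i = false ->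
  exists p : EndsT, mem p (W f) /\ ~ mem p (W g).
Proof.
  intros f g i Hf Hg. destruct (end_D i) as [p Hp]. exists p; split.
  - eapply SUP; [exact Hp| |apply W_CC]. intros x [j Hx]. exists (to_nat (i, j)).
    rewrite cancel_of_to; simpl; auto.
  - intro HpW. destruct (DISJ_ex p _ _ Hp HpW) as [x [[j Hx] [n [Hgn Hn]]]].
    pose proof (HK2 _ _ _ Hx Hn). subst n. rewrite cancel_of_to in Hgn. simpl in Hgn. congruence.
Qed.

Lemma not_metr_core : False.
Proof.
  destruct (end_D 0) as [d0 _].
  set (netf := fun n => proj1_sig (constructive_indefinite_description _ (net n))).
  assert (Hnet : forall n q, exists c, In c (netf n) /\ (m c q < / (INR n + 1))%R).
  { intros n. unfold netf. destruct (constructive_indefinite_description _ _); simpl; auto. }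
  set (ctr := fun ij : nat * nat => nth (snd ij) (netf (fst ij)) d0).
  set (rad := fun n => (/ (INR n + 1))%R).
  set (Good := fun f ij => forall q, (m (ctr ij) q < rad (fst ij))%R -> mem q (W f)).
  set (PL := fun f L => (forall ij, In ij L -> Good f ij) /\
       forall q, mem q (W f) -> exists ij, In ij L /\ (m (ctr ij) q < rad (fst ij))%R).
  assert (HL : forall f, exists L, PL f L).
  { intro f.
    destruct (CL (nat * nat) (fun ij q => (m (ctr ij) q < rad (fst ij))%R /\ Good f ij) (W f))
      as [L [HL1 HL2]].
    - intro ij. apply open_and, ball_open.
    - apply W_CC.
    - intros p Hp.
      assert (Hop : @ends_open G E mul (fun q => mem q (W f))).
      { intros p' Hp'. exists (W f); split; auto. apply W_CC. }
      destruct (proj1 (Hmo _) Hop p Hp) as [eps [Heps Hball]].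
      destruct (archimed_cor1 (eps / 2) ltac:(lra)) as [N [HN HN0]].
      destruct (Hnet N p) as [c [Hc Hcp]].
      destruct (In_nth _ _ d0 Hc) as [j [_ Hj]].
      assert (HrN : (rad N < eps / 2)%R).
      { unfold rad. eapply Rlt_trans; [|exact HN]. apply Rinv_lt_contravar.
        apply lt_0_INR in HN0. pose proof (posn N). nra. lra. }
      exists (N, j). unfold ctr; simpl. rewrite Hj. split; auto.
      unfold Good, ctr; simpl; rewrite Hj. intros q Hq. apply Hball.
      pose proof (Hmt p c q). rewrite (Hms p c) in H. unfold rad in *. lra.
    - exists L; split.
      + intros ij Hij. destruct (HL1 ij Hij) as [p [_ ?]]; auto.
      + intros q Hq. destruct (HL2 q Hq) as [ij [? [? _]]]; eauto. }
  set (Lf := fun f => proj1_sig (constructive_indefinite_description _ (HL f))).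
  assert (HLf : forall f, PL f (Lf f)).
  { intro f; unfold Lf; destruct (constructive_indefinite_description _ _); simpl; auto. }
  assert (Hkey : forall f g, Lf f = Lf g -> forall q, mem q (W f) -> mem q (W g)).
  { intros f g Heq q Hq. destruct (proj2 (HLf f) q Hq) as [ij [Hij Hq']].
    rewrite Heq in Hij. apply (proj1 (HLf g) ij Hij); auto. }
  apply (cantor (fun f => enc (Lf f))).
  intros f g Hfg i. apply enc_inj in Hfg.
  destruct (f i) eqn:Hf, (g i) eqn:Hg; auto.
  - destruct (distinct f g i Hf Hg) as [p [H1 H2]]. exfalso; apply H2; eapply Hkey; eauto.
  - destruct (distinct g f i Hg Hf) as [p [H1 H2]]. exfalso; apply H2; eapply Hkey; eauto.
Qed.

End Core.
End NonMetr.

Fixpoint prefix {X : Type} (ch : list X -> X) (n : nat) : list X :=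
  match n with 0 => nil | S k => ch (prefix ch k) :: prefix ch k end.

Lemma prefix_in : forall X (ch : list X -> X) m n, m < n -> In (ch (prefix ch m)) (prefix ch n).
Proof.
  intros X ch m n H; induction H; simpl; auto.
Qed.

Lemma case2 : forall B, bnd B -> ~ finite_family (fun C => is_comp1 E (fun x => ~ B x) C /\ ~ bnd C) ->
  exists K : nat -> G -> Prop, (forall n, closedB B (K n)) /\ (forall n n' x, K n x -> K n' x -> n = n') /\
    (forall i, ~ bnd (fun x => exists j, K (to_nat (i, j)) x)).
Proof.
  intros B HB Hfin.
  set (Q := fun C => is_comp1 E (fun x => ~ B x) C /\ ~ bnd C).
  assert (Hnext : forall l, exists C, Q C /\ ~ In C l).
  { intro l. apply NNPP; intro H. apply Hfin. exists l. intros C HC. apply NNPP; intro; apply H; exists C; auto. }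
  set (ch := fun l => proj1_sig (constructive_indefinite_description _ (Hnext l))).
  assert (Hch : forall l, Q (ch l) /\ ~ In (ch l) l).
  { intro l; unfold ch; destruct (constructive_indefinite_description _ _); simpl; auto. }
  exists (fun n => ch (prefix ch n)). split; [|split].
  - intro n. apply comp_closedB, (Hch (prefix ch n)).
  - intros n n' x Hx Hx'.
    assert (Heq : ch (prefix ch n) = ch (prefix ch n')).
    { eapply comp_meet; [apply (Hch _)|apply (Hch _)|eauto]. }
    destruct (lt_eq_lt_dec n n') as [[Hlt|?]|Hlt]; auto.
    + exfalso. apply (proj2 (Hch (prefix ch n'))). rewrite <- Heq. apply prefix_in; auto.
    + exfalso. apply (proj2 (Hch (prefix ch n))). rewrite Heq. apply prefix_in; auto.
  - intros i Hb. apply (proj2 (proj1 (Hch (prefix ch (to_nat (i, 0)))))) .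
    eapply bnd_sub; [|exact Hb]. intros x Hx; exists 0; auto.
Qed.

Fixpoint radf (st : nat -> nat) (n : nat) : nat :=
  match n with 0 => 0 | S k => st (radf st k) end.

Lemma case1 : forall B, bnd B -> ~ bnd (union_bounded_comps E (fun x => ~ B x)) ->
  exists K : nat -> G -> Prop, (forall n, closedB B (K n)) /\ (forall n n' x, K n x -> K n' x -> n = n') /\
    (forall i, ~ bnd (fun x => exists j, K (to_nat (i, j)) x)).
Proof.
  intros B HB Hun.
  assert (Hstep : forall R, exists pr : (G -> Prop) * nat, is_comp1 E (fun x => ~ B x) (fst pr) /\
     (exists x, fst pr x /\ ~ Bn R x) /\ (forall x, fst pr x -> Bn (snd pr) x) /\ R < snd pr).
  { intro R. destruct (classic (exists y, union_bounded_comps E (fun x => ~ B x) y /\ ~ Bn R y)) as [[y [[C [HC [HCb HCy]]] Hy]]|Hno].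
    - apply bnd_ball in HCb as [n0 Hn0]. exists (C, max n0 (S R)); simpl. repeat split; auto.
      exists y; auto. intros x Hx. eapply Bn_mono; [apply Hn0; auto|lia]. lia.
    - exfalso. apply Hun. apply bnd_ball. exists R. intros x Hx. apply NNPP; intro; apply Hno; eauto. }
  set (nx := fun R => proj1_sig (constructive_indefinite_description _ (Hstep R))).
  assert (Hnx : forall R, is_comp1 E (fun x => ~ B x) (fst (nx R)) /\
     (exists x, fst (nx R) x /\ ~ Bn R x) /\ (forall x, fst (nx R) x -> Bn (snd (nx R)) x) /\ R < snd (nx R)).
  { intro R; unfold nx; destruct (constructive_indefinite_description _ _); simpl; auto. }
  set (st := fun R => snd (nx R)).
  set (K := fun n => fst (nx (radf st n))).
  assert (Hrs : forall n, radf st n < radf st (S n)) by (intro n; simpl; apply (Hnx (radf st n))).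
  assert (Hrn : forall n, n <= radf st n) by (induction n; [lia|pose proof (Hrs n); lia]).
  assert (Hmono : forall a b, a <= b -> radf st a <= radf st b).
  { intros a b H; induction H; auto. pose proof (Hrs m); lia. }
  assert (Hin : forall n x, K n x -> Bn (radf st (S n)) x) by (intros n x Hx; apply (Hnx (radf st n)); auto).
  assert (Hfar : forall n, exists x, K n x /\ ~ Bn (radf st n) x) by (intro n; apply (Hnx (radf st n))).
  assert (Hdist : forall n n', n < n' -> forall x, K n x -> K n' x -> False).
  { intros n n' Hlt x Hx Hx'.
    assert (Heq : K n = K n') by (eapply comp_meet; [apply (Hnx _)|apply (Hnx _)|eauto]).
    destruct (Hfar n') as [y [Hy Hny]]. apply Hny. rewrite <- Heq in Hy.
    eapply Bn_mono; [apply Hin; exact Hy|]. apply Hmono; lia. }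
  exists K. split; [|split].
  - intro n. apply comp_closedB, (Hnx (radf st n)).
  - intros n n' x Hx Hx'. destruct (lt_eq_lt_dec n n') as [[Hlt|?]|Hlt]; auto.
    + exfalso; eapply (Hdist n n'); eauto.
    + exfalso; eapply (Hdist n' n); eauto.
  - intros i Hb. apply bnd_ball in Hb as [N HN].
    destruct (Hfar (to_nat (i, N))) as [y [Hy Hny]]. apply Hny.
    eapply Bn_mono; [apply HN; exists N; exact Hy|].
    pose proof (to_nat_non_decreasing i N). pose proof (Hrn (to_nat (i, N))). lia.
Qed.

Theorem main_thm : ~ metrizable_ends E mul <->
  ((exists B, ls_bounded E B /\
      ~ ls_bounded E (union_bounded_comps E (fun x => ~ B x))) \/
   (exists B, ls_bounded E B /\
      ~ finite_family (fun C => is_comp1 E (fun x => ~ B x) C /\ ~ ls_bounded E C))).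
Proof.
  split.
  - intro Hn. apply NNPP; intro Hc. apply Hn. apply metrizable.
    + intro n. apply NNPP; intro H. apply Hc. left. exists (Bn n). split; auto. apply Bn_bnd.
    + intro n. apply NNPP; intro H. apply Hc. right. exists (Bn n). split; auto. apply Bn_bnd.
  - intros HH [m [A1 [A2 [A3 A4]]]].
    destruct HH as [[B [HB H]]|[B [HB H]]].
    + destruct (case1 B HB H) as [K [K1 [K2 K3]]]. exact (not_metr_core m A1 A2 A3 A4 B K HB K1 K2 K3).
    + destruct (case2 B HB H) as [K [K1 [K2 K3]]]. exact (not_metr_core m A1 A2 A3 A4 B K HB K1 K2 K3).
Qed.

End Main.

Theorem corollary7p10 (G : Type) (mul : G -> G -> G) (inv : G -> G) (e : G)
  (E : G -> G -> Prop)
  (Hgrp : group_laws mul inv e)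
  (Hsym : forall x y, E x y -> E y x)
  (Hconn : connected_graph E)
  (Hinv : forall g x y n, dle E (mul g x) (mul g y) n <-> dle E x y n) :
  ~ metrizable_ends E mul <->
  ((exists B, ls_bounded E B /\
      ~ ls_bounded E (union_bounded_comps E (fun x => ~ B x))) \/
   (exists B, ls_bounded E B /\
      ~ finite_family (fun C => is_comp1 E (fun x => ~ B x) C /\ ~ ls_bounded E C))).
Proof.
  exact (main_thm G mul inv e E Hgrp Hsym Hconn Hinv).
Qed.
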